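(* Let $(V,E)$ be a finite graph with $E\ne\emptyset$ and $p\in(0,1)$. Let $(\eta_t,\sigma_t)_{t\ge0}$ be a continuous-time Markov jump process on $\{0,1\}^E\times\{-1,1\}^V$ with rates: if there exists $x\in V$ such that $\sigma'=\sigma^x$ and $\eta'(e)=\eta(e)$ for all $e\in E\setminus E_x$, then $c((\eta,\sigma),(\eta',\sigma'))=(1-p)^{|\{e\in E_x:\eta'(e)=0\}|}p^{|\{e\in E_x:\eta'(e)=1\}|}\mathbf 1_{(\eta',\sigma')\in\mathcal C_x}$; all other off-diagonal rates are $0$. Then $(\eta_t,\sigma_t)_{t\ge0}$ is reversible with respect to $IP$; its spin marginal $(\sigma_t)_{t\ge0}$ is a Markov jump process evolving according to the Glauber dynamics with rates $c(\sigma,\sigma^x)=(1-p)^{|\{e\in E_x:\delta_\sigma(e)=1\}|}$ for $x\in V$ (and rate $0$ for changes of two or more spins); and its edge marginal $(\eta_t)_{t\ge0}$ is not a Markov jump process.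
   Context: Edge configurations $\eta\in\{0,1\}^E$, spin configurations $\sigma\in\{-1,1\}^V$. For $e=\langle x,y\rangle$, $\delta_\sigma(e)=\mathbf 1_{\sigma(x)=\sigma(y)}$. $IP(\eta,\sigma)=\frac1Z\prod_{e\in E}\big(p\mathbf 1_{\eta(e)=1}\delta_\sigma(e)+(1-p)\mathbf 1_{\eta(e)=0}\big)$ with $Z$ the normalizing constant. $E_x$ is the set of edges with endvertex $x$; $\sigma^x$ is $\sigma$ with the spin at $x$ flipped. $\mathcal C_x=\{(\eta,\sigma):\eta(e)\le\delta_\sigma(e)\text{ for all }e\in E_x\}$. Reversibility w.r.t. $IP$ means $IP(a)c(a,b)=IP(b)c(b,a)$ for all states $a,b$. A marginal process is a Markov jump process if it is a time-homogeneous Markov process for every initial distribution, with transition rates not depending on the initial distribution. *)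

(* Defs.v *)
From HB Require Import structures.
From mathcomp Require Import all_boot all_order all_algebra.
From mathcomp Require Import all_classical all_reals all_analysis.
Set Implicit Arguments. Unset Strict Implicit. Unset Printing Implicit Defensive.
Import Order.TTheory GRing.Theory Num.Theory.
Local Open Scope ring_scope.

Definition is_edge (V : finType) (adj : rel V) (A : {set V}) : bool :=
  [exists x, exists y, adj x y && (A == [set x; y])].

Definition edge (V : finType) (adj : rel V) := {A : {set V} | is_edge adj A}.

(* edge configurations eta in {0,1}^E (true = 1),
   spin configurations sigma in {-1,1}^V (true = +1, false = -1) *)
Definition ecfg (V : finType) (adj : rel V) := {ffun edge adj -> bool}.
Definition scfg (V : finType) := {ffun V -> bool}.
Definition state (V : finType) (adj : rel V) := (ecfg adj * scfg V)%type.

Section Model.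
Variables (R : realType) (V : finType) (adj : rel V) (p : R).

Definition delta (s : scfg V) (e : edge adj) : bool :=
  [forall x in val e, forall y in val e, s x == s y].

Definition inEx (x : V) (e : edge adj) : bool := x \in val e.

Definition flip (s : scfg V) (x : V) : scfg V :=
  [ffun y => if y == x then ~~ s y else s y].

Definition inC (x : V) (a : state adj) : bool :=
  [forall e, inEx x e ==> (a.1 e ==> delta a.2 e)].

Definition jump_at (x : V) (a b : state adj) : bool :=
  (b.2 == flip a.2 x) && [forall e, ~~ inEx x e ==> (b.1 e == a.1 e)].

Definition jump_weight (x : V) (b : state adj) : R :=
  (1 - p) ^+ #|[set e | inEx x e & ~~ b.1 e]|
  * p ^+ #|[set e | inEx x e & b.1 e]| * (inC x b)%:R.

(* joint rates c((eta,sigma),(eta',sigma')) (the x, if any, is unique) *)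
Definition joint_rate (a b : state adj) : R :=
  match [pick x | jump_at x a b] with
  | Some x => jump_weight x b
  | None => 0
  end.

Definition glauber_rate (s t : scfg V) : R :=
  match [pick x | t == flip s x] with
  | Some x => (1 - p) ^+ #|[set e | inEx x e & delta s e]|
  | None => 0
  end.

Definition IPweight (a : state adj) : R :=
  \prod_(e : edge adj)
     (if a.1 e then p * (delta a.2 e)%:R else 1 - p).
Definition IPZ : R := \sum_(a : state adj) IPweight a.
Definition IP (a : state adj) : R := IPweight a / IPZ.
End Model.

Section MJP.
Variable R : realType.

Definition rates (S : finType) (c : S -> S -> R) : Prop :=
  forall a b, a != b -> 0 <= c a b.

Definition gen (S : finType) (c : S -> S -> R) (a b : S) : R :=
  if a == b then - \sum_(b' | b' != a) c a b' else c a b.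

Fixpoint mpow (S : finType) (Q : S -> S -> R) (k : nat) (a b : S) : R :=
  match k with
  | 0 => (a == b)%:R
  | k.+1 => \sum_(m : S) mpow Q k a m * Q m b
  end.

Definition semigroup (S : finType) (Q : S -> S -> R) (t : R) (a b : S) : R :=
  limn (fun n => \sum_(k < n) (t ^+ k / (k`!)%:R * mpow Q k a b)).

Definition reversible (S : finType) (pi : S -> R) (c : S -> S -> R) : Prop :=
  forall a b, pi a * c a b = pi b * c b a.

Definition is_distr (S : finType) (mu : S -> R) : Prop :=
  (forall a, 0 <= mu a) /\ \sum_a mu a = 1.

Definition pushforward (S T : finType) (f : S -> T) (mu : S -> R) (b : T) : R :=
  \sum_(a | f a == b) mu a.

Fixpoint fdd_go (S T : finType) (c : S -> S -> R) (f : S -> T) (a : S)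
    (steps : seq (R * T)) : R :=
  match steps with
  | [::] => 1
  | (dt, b) :: st =>
      \sum_(a' : S) semigroup (gen c) dt a a' * (f a' == b)%:R * fdd_go c f a' st
  end.

(* finite-dimensional distributions of (f(X_t))_t, where X is the Markov
   jump process with rates c and initial distribution mu: the probability
   that f(X_{t_i}) = b_i for t_i = dt_1 + ... + dt_i *)
Definition fdd (S T : finType) (c : S -> S -> R) (f : S -> T) (mu : S -> R)
    (steps : seq (R * T)) : R :=
  \sum_(a : S) mu a * fdd_go c f a steps.

Definition MJP_marginal (S T : finType) (c : S -> S -> R) (f : S -> T)
    (c' : T -> T -> R) : Prop :=
  forall mu : S -> R, is_distr mu ->
  forall steps : seq (R * T), all (fun st => 0 <= st.1) steps ->
    fdd c f mu steps = fdd c' id (pushforward f mu) steps.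

Definition is_MJP (S T : finType) (c : S -> S -> R) (f : S -> T) : Prop :=
  exists c' : T -> T -> R, rates c' /\ MJP_marginal c f c'.
End MJP.

(* Main.v *)
Require Import Defs.
From HB Require Import structures.
From mathcomp Require Import all_boot all_order all_algebra.
From mathcomp Require Import all_classical all_reals all_analysis.
From mathcomp Require Import ring lra zify.
Import Order.TTheory GRing.Theory Num.Theory.
Local Open Scope ring_scope.

Lemma fact_ge_pow2 k : (2 ^ k <= 2 * k`!)%N.
Proof.
elim: k => [//|k IH]; rewrite factS expnS.
case: k IH => [//|k] IH.
have := leq_mul (leqnn k.+2) IH. nia.
Qed.

Section An.
Variable R : realType.

Lemma inv_fact_le k : ((k`!)%:R : R)^-1 <= 2 * (2^-1)^+k.
Proof.
have hk : (0 : R) < (k`!)%:R by rewrite ltr0n fact_gt0.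
rewrite exprVn -[2 * _]/(2 / 2 ^+ k) ler_pdivlMr; last by rewrite exprn_gt0.
rewrite mulrC ler_pdivrMr // -natrX -natrM ler_nat.
by rewrite fact_ge_pow2.
Qed.

Lemma geom_le n : \sum_(k < n) (2^-1 : R)^+k <= 2.
Proof.
suff -> : \sum_(k < n) (2^-1 : R)^+k = 2 - 2 * (2^-1)^+n.
  by rewrite lerBlDr lerDl mulr_ge0 // exprn_ge0.
elim: n => [|n IH]; first by rewrite big_ord0 expr0 mulr1 subrr.
rewrite big_ord_recr /= IH exprS; by field.
Qed.

Lemma taylor (u : nat -> R) (M t : R) : 0 <= M -> 0 < t -> t * M <= 1 ->
  (forall k, `|u k| <= M ^+ k) ->
  let S := fun n => \sum_(k < n) (t ^+ k / (k`!)%:R * u k) in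
  cvgn S /\ `|limn S - u 0%N - t * u 1%N| <= 2 * (t * M) ^+ 2.
Proof.
move=> M0 t0 tM1 hu S.
set x := t * M.
have x0 : 0 <= x by rewrite mulr_ge0 // ltW.
set a := fun k => t ^+ k / (k`!)%:R * u k.
have hfk k : (0 : R) < (k`!)%:R by rewrite ltr0n fact_gt0.
have T1 k : `|a k| <= x ^+ k / (k`!)%:R.
  rewrite /a normrM ger0_norm; last by rewrite divr_ge0 // exprn_ge0 // ltW.
  rewrite /x exprMn; apply: (@le_trans _ _ (t ^+ k / (k`!)%:R * M ^+ k)).
    by rewrite ler_wpM2l // divr_ge0 // exprn_ge0 // ltW.
  by rewrite mulrAC.
have xk k : x ^+ k <= 1 by rewrite exprn_ile1.
have T2 k : `|a k| <= 2 * (2^-1)^+k.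
  apply: (le_trans (T1 k)); apply: le_trans (inv_fact_le k).
  by rewrite -[X in _ <= X]mul1r ler_wpM2r // invr_ge0 ltW.
have T3 i : `|a i.+2| <= x ^+ 2 * (2^-1 * (2^-1)^+i).
  apply: (le_trans (T1 _)).
  have e1 : x ^+ i.+2 = x ^+ i * x ^+ 2 by rewrite -exprD addn2.
  apply: (@le_trans _ _ (x ^+ 2 / ((i.+2)`!)%:R)).
    rewrite e1; apply: ler_wpM2r; first by rewrite invr_ge0 ltW.
    rewrite -[X in _ <= X]mul1r; apply: ler_wpM2r; [exact: exprn_ge0 | exact: xk].
  rewrite ler_wpM2l ?exprn_ge0 //; apply: le_trans (inv_fact_le _) _.
  by rewrite !exprS mulrA divff // mul1r.
have SE n : S n.+2 = u 0%N + t * u 1%N + \sum_(i < n) a i.+2.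
  rewrite /S big_ord_recl big_ord_recl /= /a /=.
  rewrite expr0 expr1 !fact0 !factS /= !muln1 div1r invr1 !mul1r mulr1 addrA.
  by [].
have tail n : `|\sum_(i < n) a i.+2| <= x ^+ 2.
  apply: (le_trans (ler_norm_sum _ _ _)).
  apply: (@le_trans _ _ (\sum_(i < n) x ^+ 2 * (2^-1 * (2^-1)^+i))).
    by apply: ler_sum => i _; apply: T3.
  rewrite -mulr_sumr -mulr_sumr; rewrite -[X in _ <= X]mulr1.
  apply: ler_wpM2l; first exact: exprn_ge0.
  have := geom_le n; lra.
have cS : cvgn S.
  have -> : S = series a by rewrite seriesEord.
  apply: normed_cvg; apply: nondecreasing_is_cvgn.
    apply/nondecreasing_seqP => n.
    by rewrite /normed_series_of !seriesEord /= big_ord_recr /= lerDl normr_ge0.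
  exists 4 => _ [n _ <-].
  rewrite /normed_series_of seriesEord /=.
  apply: (@le_trans _ _ (\sum_(k < n) 2 * (2^-1 : R)^+k)).
    by apply: ler_sum => i _; apply: T2.
  by rewrite -mulr_sumr; have := geom_le n; lra.
split => //.
have h1 : limn S <= u 0%N + t * u 1%N + x ^+ 2.
  apply: limr_le => //; near=> n.
  have : (2 <= n)%N by near: n; exact: nbhs_infty_ge.
  move=> n2; rewrite -(subnK n2) addn2 SE lerD2l.
  by have := tail (n - 2)%N; rewrite ler_norml => /andP[]; lra.
have h2 : u 0%N + t * u 1%N - x ^+ 2 <= limn S.
  apply: limr_ge => //; near=> n.
  have : (2 <= n)%N by near: n; exact: nbhs_infty_ge.
  move=> n2; rewrite -(subnK n2) addn2 SE lerD2l.
  by have := tail (n - 2)%N; rewrite ler_norml => /andP[]; lra.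
have x20 : 0 <= x ^+ 2 by exact: exprn_ge0.
rewrite ler_norml; apply/andP; split; lra.
Unshelve. all: by end_near.
Qed.
End An.

Section Gen.
Variable R : realType.

Lemma lim_sum (I : finType) (P : pred I) (s : I -> nat -> R^o) :
  (forall i, cvgn (fun n => s i n)) ->
  limn (fun n => \sum_(i | P i) s i n) = \sum_(i | P i) limn (fun n => s i n).
Proof.
move=> hs; apply: cvg_lim => //; apply: cvg_big.
  exact: add_continuous.
by move=> i _; exact: hs.
Qed.

Definition Mb (S : finType) (Q : S -> S -> R) : R := \sum_a \sum_b `|Q a b|.
Arguments Mb {S}.

Lemma Mb_ge0 (S : finType) (Q : S -> S -> R) : 0 <= Mb Q.
Proof. by apply: sumr_ge0 => a _; apply: sumr_ge0 => b _. Qed.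

Lemma mpow_bound (S : finType) (Q : S -> S -> R) k a b :
  `|mpow Q k a b| <= Mb Q ^+ k.
Proof.
elim: k b => [|k IH] b /=.
  by case: (a == b); rewrite ?normr1 ?normr0 ?expr0.
apply: (le_trans (ler_norm_sum _ _ _)).
apply: (@le_trans _ _ (\sum_m Mb Q ^+ k * `|Q m b|)).
  by apply: ler_sum => m _; rewrite normrM ler_wpM2r.
rewrite -mulr_sumr exprSr ler_wpM2l ?exprn_ge0 ?Mb_ge0 //.
rewrite /Mb exchange_big /=.
rewrite [X in _ <= X](bigD1 b) //= lerDl; apply: sumr_ge0 => i _; apply: sumr_ge0 => j _; exact: normr_ge0.
Qed.

Lemma sg_cvg (u : nat -> R) (M t : R) : 0 <= M -> 0 <= t ->
  (forall k, `|u k| <= M ^+ k) ->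
  cvgn (fun n => \sum_(k < n) (t ^+ k / (k`!)%:R * u k)).
Proof.
move=> M0 t0 hu.
set a := fun k => t ^+ k / (k`!)%:R * u k.
have -> : (fun n => \sum_(k < n) (t ^+ k / (k`!)%:R * u k)) = series a
  by rewrite seriesEord.
have hfk k : (0 : R) < (k`!)%:R by rewrite ltr0n fact_gt0.
have T1 k : `|a k| <= exp_coeff (t * M) k.
  rewrite /a normrM ger0_norm; last by rewrite divr_ge0 // exprn_ge0.
  apply: (@le_trans _ _ (t ^+ k / (k`!)%:R * M ^+ k)).
    by rewrite ler_wpM2l // divr_ge0 // exprn_ge0.
  by rewrite le_eqVlt; apply/orP; left; apply/eqP; rewrite exp_coeffE /= exprMn; ring.
have tM0 : 0 <= t * M by rewrite mulr_ge0.
have ndE : {homo series (exp_coeff (t * M)) : n m / (n <= m)%N >-> n <= m}.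
  apply/nondecreasing_seqP => n.
  by rewrite !seriesEord /= big_ord_recr /= lerDl exp_coeff_ge0.
apply: normed_cvg; apply: nondecreasing_is_cvgn.
  apply/nondecreasing_seqP => n.
  by rewrite /normed_series_of !seriesEord /= big_ord_recr /= lerDl normr_ge0.
exists (limn (fun n => (series (exp_coeff (t * M)) n : R^o))) => _ [n _ <-].
apply: le_trans (nondecreasing_cvgn_le ndE (is_cvg_series_exp_coeff _) n).
rewrite /normed_series_of !seriesEord /=.
by apply: ler_sum => i _; apply: T1.
Qed.

Lemma semigroup_cvg (S : finType) (Q : S -> S -> R) t a b : 0 <= t ->
  cvgn (fun n => (\sum_(k < n) (t ^+ k / (k`!)%:R * mpow Q k a b) : R^o)).
Proof. move=> t0; exact: (sg_cvg _ _ _ (Mb_ge0 _ Q) t0 (fun k => mpow_bound _ Q k a b)). Qed.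

End Gen.
Arguments Mb {R S}.
Section Lump.
Variables (R : realType) (S T : finType) (c : S -> S -> R) (f : S -> T)
  (c' : T -> T -> R).
Hypothesis hl : forall a t, t != f a -> \sum_(a' | f a' == t) c a a' = c' (f a) t.

Lemma fiber_sumC (g : S -> R) x :
  \sum_(b | f b != x) g b = \sum_(t | t != x) \sum_(b | f b == t) g b.
Proof.
rewrite (partition_big f (fun t => t != x)) //.
apply: eq_bigr => t tx; apply: eq_bigl => b.
by case: (eqVneq (f b) t) => [->|]; rewrite ?tx ?andbF.
Qed.

Lemma fiber_sum (g : S -> R) :
  \sum_b g b = \sum_t \sum_(b | f b == t) g b.
Proof. by rewrite (partition_big f predT). Qed.

Lemma gen_lump a t :
  \sum_(a' | f a' == t) gen c a a' = gen c' (f a) t.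
Proof.
rewrite /gen; case: (eqVneq t (f a)) => [->|ht].
  rewrite (bigD1 a) //= eqxx.
  have -> : \sum_(i | (f i == f a) && (i != a)) (if a == i then - \sum_(b' | b' != a) c a b' else c a i)
      = \sum_(i | (f i == f a) && (i != a)) c a i.
    by apply: eq_bigr => i /andP[_ ia]; rewrite eq_sym (negbTE ia).
  rewrite (bigID (fun b => f b == f a) (fun b' => b' != a)) /=.
  have -> : \sum_(i | (i != a) && (f i == f a)) c a i = \sum_(i | (f i == f a) && (i != a)) c a i
    by apply: eq_bigl => i; rewrite andbC.
  have -> : \sum_(i | (i != a) && (f i != f a)) c a i = \sum_(i | f i != f a) c a i.
    apply: eq_bigl => i; case: (eqVneq i a) => [->|//]; by rewrite eqxx.
  rewrite fiber_sumC opprD addrAC addNr add0r.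
  by congr (- _); apply: eq_bigr => t' ht'; apply: hl.
rewrite -(hl _ _ ht).
apply: eq_bigr => a' /eqP fa'; case: (eqVneq a a') => // aa'.
by move: ht; rewrite -fa' aa' eqxx.
Qed.

Lemma mpow_lump k a t :
  \sum_(a' | f a' == t) mpow (gen c) k a a' = mpow (gen c') k (f a) t.
Proof.
elim: k a t => [|k IH] a t /=.
  case: (eqVneq (f a) t) => [<-|ht].
    rewrite (bigD1 a) //= eqxx big1 ?addr0 // => i /andP[_ ia].
    by rewrite eq_sym (negbTE ia).
  rewrite big1 // => i /eqP fi; case: (eqVneq a i) => // ai.
  by move: ht; rewrite ai fi eqxx.
rewrite exchange_big /=.
under eq_bigr do rewrite -mulr_sumr gen_lump.
rewrite (fiber_sum (fun m => mpow (gen c) k a m * gen c' (f m) t)).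
apply: eq_bigr => t' _; rewrite -IH mulr_suml.
by apply: eq_bigr => i /eqP ->.
Qed.

Lemma sg_lump s a t : 0 <= s ->
  \sum_(a' | f a' == t) semigroup (gen c) s a a' = semigroup (gen c') s (f a) t.
Proof.
move=> s0; rewrite /semigroup -lim_sum; last first.
  by move=> i; exact: (@semigroup_cvg R _ (gen c) s a i s0).
f_equal; f_equal; apply: funext => n.
rewrite exchange_big /=; apply: eq_bigr => k _.
by rewrite -mulr_sumr mpow_lump.
Qed.

Lemma fdd_go_lump a st : all (fun st => 0 <= st.1) st ->
  fdd_go c f a st = fdd_go c' id (f a) st.
Proof.
elim: st a => [//|[dt b] st IH] a /= /andP[dt0 hst].
rewrite [RHS](bigD1 b) //= eqxx mulr1 [X in _ = _ + X]big1 ?addr0; last first.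
  by move=> i ib; rewrite /= (negbTE ib) mulr0 mul0r.
rewrite -sg_lump // mulr_suml [RHS]big_mkcond /=; apply: eq_bigr => i _.
case: (eqVneq (f i) b) => [<-|_]; last by rewrite mulr0 mul0r.
by rewrite mulr1 IH.
Qed.

Lemma MJP_lump : MJP_marginal c f c'.
Proof.
move=> mu _ st hst; rewrite /fdd /pushforward.
under eq_bigr do rewrite fdd_go_lump //.
rewrite (fiber_sum (fun a => mu a * fdd_go c' id (f a) st)).
apply: eq_bigr => t _; rewrite mulr_suml; apply: eq_bigr => i /eqP -> //.
Qed.
End Lump.

Section Deriv.
Variable R : realType.

Lemma zero_of_small (d C M : R) : 0 <= C -> 0 <= M ->
  (forall t, 0 < t -> t * M <= 1 -> `|d| <= C * t) -> d = 0.
Proof.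
move=> C0 M0 H; apply/eqP; apply: contraT => dn0.
have dp : 0 < `|d| by rewrite normr_gt0.
set u := `|d| / (C + 1).
have u0 : 0 < u by rewrite divr_gt0 // ltr_wpDl.
have hu : u * (C + 1) = `|d| by rewrite divfK // gt_eqF // ltr_wpDl.
set w := (M + 1)^-1.
have w0 : 0 < w by rewrite invr_gt0 ltr_wpDl.
have hw : w * (M + 1) = 1 by rewrite mulVf // gt_eqF // ltr_wpDl.
set t := Order.min w u.
have t0 : 0 < t by rewrite lt_min w0 u0.
have t1 : t <= w by rewrite ge_min lexx.
have t2 : t <= u by rewrite ge_min lexx orbT.
have tM : t * M <= 1.
  have : t * (M + 1) <= w * (M + 1) by rewrite ler_wpM2r // addr_ge0.
  nra.
have := H t t0 tM.
have : C * t <= C * u by rewrite ler_wpM2l.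
nra.
Qed.

Lemma mpow1 (S : finType) (Q : S -> S -> R) a b : mpow Q 1 a b = Q a b.
Proof.
rewrite /= (bigD1 a) //= eqxx mul1r big1 ?addr0 // => m /negbTE.
by rewrite eq_sym => ->; rewrite mul0r.
Qed.

Lemma entry_bound (S : finType) (Q : S -> S -> R) a a' t :
  0 < t -> t * Mb Q <= 1 ->
  `|semigroup Q t a a' - (a == a')%:R - t * Q a a'| <= 2 * (t * Mb Q) ^+ 2.
Proof.
move=> t0 tM.
have [_ h] := @taylor R (fun k => mpow Q k a a') _ _ (@Mb_ge0 R S Q) t0 tM
   (fun k => @mpow_bound R S Q k a a').
by move: h; rewrite mpow1.
Qed.

Lemma row_bound (S : finType) (Q : S -> S -> R) (h : S -> R) a t :
  (forall k, `|h k| <= 1) -> 0 < t -> t * Mb Q <= 1 ->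
  `|\sum_a' semigroup Q t a a' * h a' - h a - t * \sum_a' Q a a' * h a'|
     <= #|S|%:R * (2 * (t * Mb Q) ^+ 2).
Proof.
move=> hb t0 tM.
have -> : h a = \sum_a' (a == a')%:R * h a'.
  rewrite (bigD1 a) //= eqxx mul1r big1 ?addr0 // => m /negbTE.
  by rewrite eq_sym => ->; rewrite mul0r.
rewrite mulr_sumr -!sumrB.
apply: (le_trans (ler_norm_sum _ _ _)).
apply: (@le_trans _ _ (\sum_(a' : S) 2 * (t * Mb Q) ^+ 2)).
  apply: ler_sum => a' _.
  rewrite mulrA -!mulrBl normrM.
  rewrite -[X in _ <= X]mulr1; apply: ler_pM => //.
  exact: entry_bound.
rewrite sumr_const; set z := 2 * _; rewrite mulr_natl; exact: lexx.
Qed.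

Lemma deriv_eq (S : finType) (Q : S -> S -> R) (h : S -> R) a1 a2 :
  (forall k, `|h k| <= 1) -> h a1 = h a2 ->
  (forall t, 0 < t -> \sum_a' semigroup Q t a1 a' * h a' = \sum_a' semigroup Q t a2 a' * h a') ->
  \sum_a' Q a1 a' * h a' = \sum_a' Q a2 a' * h a'.
Proof.
move=> hb h12 H.
apply/eqP; rewrite -subr_eq0; apply/eqP.
apply: (zero_of_small _ (4 * #|S|%:R * Mb Q ^+ 2) (Mb Q)).
- by rewrite mulr_ge0 // ?exprn_ge0 ?(@Mb_ge0 R S Q) // mulr_ge0.
- exact: (@Mb_ge0 R S Q).
move=> t t0 tM.
have b1 := row_bound _ Q h a1 t hb t0 tM.
have b2 := row_bound _ Q h a2 t hb t0 tM.
rewrite (H t t0) h12 in b1.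
set g := \sum_a' semigroup Q t a2 a' * h a' in b1 b2.
set q1 := \sum_a' Q a1 a' * h a' in b1 *.
set q2 := \sum_a' Q a2 a' * h a' in b2 *.
have : `|t * (q1 - q2)| <= 2 * (#|S|%:R * (2 * (t * Mb Q) ^+ 2)).
  have -> : t * (q1 - q2) = (g - h a2 - t * q2) - (g - h a2 - t * q1) by ring.
  apply: (le_trans (ler_normB _ _)); lra.
rewrite normrM gtr0_norm //.
have -> : 2 * (#|S|%:R * (2 * (t * Mb Q) ^+ 2)) = t * (4 * #|S|%:R * Mb Q ^+ 2 * t) by ring.
by rewrite ler_pM2l.
Qed.
End Deriv.
Lemma prod_ind (R : realType) (I : finType) (P B : pred I) :
  \prod_(i | P i) ((B i)%:R : R) = ([forall i, P i ==> B i])%:R.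
Proof.
case: (boolP [forall i, P i ==> B i]) => [/forallP h|].
  by rewrite big1 // => i Pi; rewrite (implyP (h i) Pi).
rewrite negb_forall => /existsP[i]; rewrite negb_imply => /andP[Pi nBi].
by rewrite (bigD1 i) //= (negbTE nBi) mul0r.
Qed.

Lemma sum_ind (R : realType) (I : finType) (P : pred I) (a0 : I) :
  \sum_(a | P a) ((a == a0)%:R : R) = (P a0)%:R.
Proof.
case: (boolP (P a0)) => Pa0.
  rewrite (bigD1 a0) //= eqxx big1 ?addr0 // => i /andP[_ /negbTE ->] //.
by rewrite big1 // => i Pi; case: eqP => // ei; move: Pa0; rewrite -ei Pi.
Qed.

Lemma sum_pt (R : realType) (I : finType) (a0 : I) (F : I -> R) :
  \sum_a ((a == a0)%:R : R) * F a = F a0.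
Proof.
rewrite (bigD1 a0) //= eqxx mul1r big1 ?addr0 // => i /negbTE ->; exact: mul0r.
Qed.

Section Model.
Variables (R : realType) (V : finType) (adj : rel V) (p : R).
Hypothesis adj_irr : irreflexive adj.
Hypothesis hp : 0 < p < 1.

Local Notation state := (state adj).

Lemma edgeP (e : edge adj) : exists u v, [/\ adj u v, u != v & val e = [set u; v]].
Proof.
have /existsP[u /existsP[v /andP[huv /eqP he]]] := valP e.
exists u, v; split => //; apply/eqP => uv; by rewrite uv adj_irr in huv.
Qed.

Lemma delta_pair (s : scfg V) (e : edge adj) u v : val e = [set u; v] ->
  delta s e = (s u == s v).
Proof.
move=> he; rewrite /delta he; apply/idP/idP.
  move=> /forallP/(_ u); rewrite !inE eqxx /= => /forallP/(_ v).
  by rewrite !inE eqxx orbT.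
move=> /eqP h; apply/forallP => x; apply/implyP; rewrite !inE => hx.
apply/forallP => y; apply/implyP; rewrite !inE => hy.
by case/orP: hx => /eqP ->; case/orP: hy => /eqP ->; rewrite ?h eqxx.
Qed.

Lemma flip_flip (s : scfg V) x : flip (flip s x) x = s.
Proof. by apply/ffunP => y; rewrite !ffunE; case: eqP => //; rewrite negbK. Qed.

Lemma flip_inj (s : scfg V) x y : flip s x = flip s y -> x = y.
Proof.
move=> /ffunP/(_ x); rewrite !ffunE eqxx.
case: (eqVneq x y) => // nxy; by case: (s x).
Qed.

Lemma delta_flip_out (s : scfg V) x (e : edge adj) : ~~ inEx x e ->
  delta (flip s x) e = delta s e.
Proof.
have [u [v [_ _ he]]] := edgeP e.
rewrite /inEx he !inE negb_or => /andP[xu xv].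
by rewrite !(delta_pair _ _ _ _ he) !ffunE ![_ == x]eq_sym (negbTE xu) (negbTE xv).
Qed.

Lemma delta_flip_in (s : scfg V) x (e : edge adj) : inEx x e ->
  delta (flip s x) e = ~~ delta s e.
Proof.
have [u [v [_ uv he]]] := edgeP e.
rewrite /inEx he !inE !(delta_pair _ _ _ _ he) !ffunE.
have vu : v != u by rewrite eq_sym.
case/orP => /eqP ->.
  by rewrite eqxx (negbTE vu); case: (s u); case: (s v).
rewrite eqxx (negbTE uv); by case: (s u); case: (s v).
Qed.

Lemma jump_sym x (a b : state) : jump_at x a b -> jump_at x b a.
Proof.
rewrite /jump_at => /andP[/eqP hb /forallP h]; apply/andP; split.
  by rewrite hb flip_flip.
apply/forallP => e; apply/implyP => he; rewrite eq_sym; exact: (implyP (h e) he).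
Qed.

Lemma jump_uniq x y (a b : state) : jump_at x a b -> jump_at y a b -> x = y.
Proof.
move=> /andP[/eqP hx _] /andP[/eqP hy _]; apply: (@flip_inj a.2).
by rewrite -hx -hy.
Qed.

Lemma joint_rateE x (a b : state) : jump_at x a b -> joint_rate p a b = jump_weight p x b.
Proof.
move=> hx; rewrite /joint_rate; case: pickP => [y hy|h0]; last by rewrite h0 in hx.
by rewrite (jump_uniq _ _ _ _ hy hx).
Qed.

Lemma joint_rate0 (a b : state) : (forall x, ~~ jump_at x a b) -> joint_rate p a b = 0.
Proof.
move=> h; rewrite /joint_rate; case: pickP => [y hy|//].
by move: (h y); rewrite hy.
Qed.

Definition fac (a : state) e : R := if a.1 e then p * (delta a.2 e)%:R else 1 - p.
Definition ww x (a : state) : R := \prod_(e | inEx x e) (if a.1 e then p else 1 - p).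

Lemma jump_weightE x (b : state) : jump_weight p x b = ww x b * (inC x b)%:R.
Proof.
rewrite /jump_weight /ww; congr (_ * _).
rewrite (bigID (fun e => b.1 e)) /= mulrC.
congr (_ * _).
  rewrite (eq_bigr (fun _ => p)); last by move=> e /andP[_ ->].
  by rewrite -prodr_const; apply: eq_bigl => e; rewrite inE.
rewrite (eq_bigr (fun _ => 1 - p)); last by move=> e /andP[_ /negbTE ->].
by rewrite -prodr_const; apply: eq_bigl => e; rewrite inE.
Qed.

Lemma prod_fac_in x (a : state) :
  \prod_(e | inEx x e) fac a e = ww x a * (inC x a)%:R.
Proof.
rewrite (eq_bigr (fun e => (if a.1 e then p else 1 - p) * ((a.1 e ==> delta a.2 e))%:R));
  last by move=> e _; rewrite /fac; case: (a.1 e); rewrite ?mulr1.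
by rewrite big_split /= prod_ind.
Qed.

Lemma IPweight_split x (a : state) :
  IPweight p a = \prod_(e | ~~ inEx x e) fac a e * (ww x a * (inC x a)%:R).
Proof.
by rewrite /IPweight (bigID (inEx x)) /= mulrC -prod_fac_in.
Qed.

Lemma part1 : reversible (@IP R V adj p) (@joint_rate R V adj p).
Proof.
move=> a b.
case: (pickP (fun x => jump_at x a b)) => [x hx|h0].
  rewrite (joint_rateE _ _ _ hx) (joint_rateE _ _ _ (jump_sym _ _ _ hx)) /IP.
  rewrite !jump_weightE !(IPweight_split x).
  have -> : \prod_(e | ~~ inEx x e) fac a e = \prod_(e | ~~ inEx x e) fac b e.
    apply: eq_bigr => e he; move: hx => /andP[/eqP hb /forallP h].
    by rewrite /fac (eqP (implyP (h e) he)) hb delta_flip_out.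
  ring.
rewrite !joint_rate0 ?mulr0 // => x.
  by apply/negP => /jump_sym; rewrite h0.
by rewrite h0.
Qed.

Lemma sum_snd (F : state -> R) (t : scfg V) :
  \sum_(a' | a'.2 == t) F a' = \sum_(eta : ecfg adj) F (eta, t).
Proof.
rewrite big_mkcond /=.
rewrite (eq_bigr (fun a' => (a'.2 == t)%:R * F (a'.1, a'.2))); last first.
  by move=> [η σ] _; case: (σ == t); rewrite ?mul1r ?mul0r.
rewrite -(pair_big xpredT xpredT (fun η σ => (σ == t)%:R * F (η, σ))) /=.
apply: eq_bigr => η _.
rewrite (bigD1 t) //= eqxx mul1r big1 ?addr0 // => σ /negbTE ->; exact: mul0r.
Qed.

Lemma glauber_hl (a : state) (t : scfg V) : t != a.2 ->
  \sum_(a' | a'.2 == t) joint_rate p a a' = glauber_rate adj p a.2 t.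
Proof.
move=> ta; rewrite /glauber_rate; case: pickP => [x /eqP ht | h0]; last first.
  rewrite big1 // => a' /eqP ha'; apply: joint_rate0 => x.
  apply/negP => /andP[/eqP hx _]; by move: (h0 x); rewrite -ha' hx eqxx.
rewrite sum_snd.
pose G e (v : bool) : R := if inEx x e then (if v then p * (delta t e)%:R else 1 - p)
                           else (v == a.1 e)%:R.
have step2 (η : ecfg adj) : joint_rate p a (η, t) = \prod_e G e (η e).
  rewrite (bigID (inEx x)) /=.
  rewrite (eq_bigr (fun e => fac (η, t) e)); last by move=> e he; rewrite /G he.
  rewrite (eq_bigr (fun e => (η e == a.1 e)%:R) (P := fun e => ~~ inEx x e));
    last by move=> e he; rewrite /G (negbTE he).
  rewrite prod_fac_in prod_ind -jump_weightE mulrC.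
  case: (boolP [forall e, ~~ inEx x e ==> (η e == a.1 e)]) => hf.
    rewrite mul1r; apply: joint_rateE; apply/andP; split; first by rewrite ht.
    exact: hf.
  rewrite mul0r; apply: joint_rate0 => y; apply/negP => hy.
  move: hy => /andP[/eqP hy1 hy2].
  have yx : y = x by apply: (flip_inj a.2); rewrite -hy1 ht.
  by move: hf; rewrite -yx hy2.
rewrite (eq_bigr _ (fun η _ => step2 η)).
rewrite -(bigA_distr_bigA G).
rewrite (eq_bigr (fun e => if inEx x e && delta a.2 e then 1 - p else 1)); last first.
  move=> e _; rewrite big_bool /G.
  case: (boolP (inEx x e)) => he /=.
    by rewrite ht delta_flip_in //; case: (delta a.2 e) => /=; lra.
  by case: (a.1 e); rewrite /= ?addr0 ?add0r.
rewrite -big_mkcond /= -prodr_const.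
by apply: eq_bigl => e; rewrite inE.
Qed.

Lemma part2 : MJP_marginal (@joint_rate R V adj p) (fun a : state => a.2)
                  (@glauber_rate R V adj p).
Proof. apply: MJP_lump => a t; exact: glauber_hl. Qed.

Lemma joint_rate_ge0 (a b : state) : 0 <= joint_rate p a b.
Proof.
have [p0 p1] := andP hp.
rewrite /joint_rate; case: pickP => [x _|//].
rewrite /jump_weight; apply: mulr_ge0; last exact: ler0n.
by apply: mulr_ge0; apply: exprn_ge0; lra.
Qed.

Lemma part3 (hE : exists x y, adj x y) :
  ~ is_MJP (@joint_rate R V adj p) (fun a : state => a.1).
Proof.
have [p0 p1] := andP hp.
move=> [c' [_ Hm]].
have [x0 [y0 hxy]] := hE.
have he0 : is_edge adj [set x0; y0].
  by apply/existsP; exists x0; apply/existsP; exists y0; rewrite hxy eqxx.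
pose e0 : edge adj := exist _ [set x0; y0] he0.
pose η0 : ecfg adj := [ffun _ => false].
pose b : ecfg adj := [ffun e => e == e0].
pose σ1 : scfg V := [ffun _ => true].
pose a1 : state := (η0, σ1).
pose a2 : state := (η0, flip σ1 x0).
pose h (a : state) : R := (a.1 == b)%:R.
pose mu (a0 : state) := fun a : state => ((a == a0)%:R : R).
have bη : (b == η0) = false.
  by apply/negbTE/eqP => /ffunP/(_ e0); rewrite !ffunE eqxx.
have dσ1 (e : edge adj) : delta σ1 e.
  apply/forallP => u; apply/implyP => _; apply/forallP => v; apply/implyP => _.
  by rewrite !ffunE.
have ine0 : inEx x0 e0 by rewrite /inEx /= !inE eqxx.
have mud a0 : is_distr (mu a0).
  split; first by move=> a; rewrite /mu ler0n.
  by rewrite /mu (sum_ind R _ predT a0).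
have push : Defs.pushforward (fun a : state => a.1) (mu a1) = Defs.pushforward (fun a : state => a.1) (mu a2).
  by apply: funext => b'; rewrite /Defs.pushforward /mu !sum_ind.
have fddE a0 t : fdd (joint_rate p) (fun a : state => a.1) (mu a0) [:: (t, b)]
    = \sum_a' semigroup (gen (joint_rate p)) t a0 a' * h a'.
  rewrite /fdd /= /mu sum_pt; apply: eq_bigr => a' _; by rewrite mulr1.
have key t : 0 < t -> \sum_a' semigroup (gen (joint_rate p)) t a1 a' * h a'
    = \sum_a' semigroup (gen (joint_rate p)) t a2 a' * h a'.
  move=> t0; rewrite -!fddE !Hm //= ?ltW // push //.
have hb (k : state) : `|h k| <= 1 by rewrite /h; case: (k.1 == b); rewrite ?normr1 ?normr0.
have := @deriv_eq R _ (gen (joint_rate p)) h a1 a2 hb erefl key.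
have hq1 : \sum_a' gen (joint_rate p) a1 a' * h a' = 0.
  apply: big1 => a' _; rewrite /h; case: (eqVneq a'.1 b) => [hb'|]; last by rewrite mulr0.
  rewrite /gen; case: (eqVneq a1 a') => [e1|ne].
    by move: hb'; rewrite -e1 /= => /eqP; rewrite eq_sym bη.
  rewrite mulr1 /joint_rate; case: pickP => [x hx|//].
  rewrite jump_weightE; case: (boolP (inEx x e0)) => hxe.
    suff -> : inC x a' = false by rewrite mulr0.
    apply/negbTE/negP => /forallP/(_ e0); rewrite hxe /= hb' /b ffunE eqxx /=.
    move: hx => /andP[/eqP -> _]; rewrite delta_flip_in //= dσ1.
    by [].
  move: hx => /andP[_ /forallP/(_ e0)]; rewrite hxe /= hb' /b !ffunE eqxx.
  by [].
have hq2 : 0 < \sum_a' gen (joint_rate p) a2 a' * h a'.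
  pose ast : state := (b, σ1).
  rewrite (bigD1 ast) //=.
  have jx : jump_at x0 a2 ast.
    apply/andP; split; first by rewrite /ast /a2 /= flip_flip.
    apply/forallP => e; apply/implyP => he; rewrite /ast /a2 /= /b !ffunE.
    by apply/eqP/negbTE; apply: contraNneq he => ->.
  have pos : 0 < gen (joint_rate p) a2 ast * h ast.
    rewrite /gen /h /ast /a2 /= xpair_eqE [η0 == b]eq_sym bη /= eqxx mulr1.
    rewrite (joint_rateE _ _ _ jx) jump_weightE.
    have -> : inC x0 (b, σ1) by apply/forallP => e; apply/implyP => _; apply/implyP => _; exact: dσ1.
    rewrite mulr1 /ww; apply: prodr_gt0 => e _; case: (b e); lra.
  have nn : 0 <= \sum_(i | i != ast) gen (joint_rate p) a2 i * h i.
    apply: sumr_ge0 => i _; rewrite /gen /h.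
    case: (eqVneq a2 i) => [<-|_]; last by apply: mulr_ge0; [exact: joint_rate_ge0 | exact: ler0n].
    by rewrite /a2 /= [η0 == b]eq_sym bη mulr0.
  lra.
rewrite hq1 => h0; move: hq2; by rewrite -h0 ltxx.
Qed.
End Model.

Theorem theorem3 (R : realType) (V : finType) (adj : rel V)
  (adj_sym : symmetric adj) (adj_irr : irreflexive adj)
  (hE : exists x y, adj x y) (p : R) (hp : 0 < p < 1) :
  reversible (@IP R V adj p) (@joint_rate R V adj p)
  /\ MJP_marginal (@joint_rate R V adj p) (fun a : state adj => a.2)
                  (@glauber_rate R V adj p)
  /\ ~ is_MJP (@joint_rate R V adj p) (fun a : state adj => a.1).
Proof.
split; first exact: part1.
split; first exact: part2.
exact: part3.
Qed.
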